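(* Let $a$ and $b$ be coprime integers and let $\ell\in G_{(a,b)}$ with $\ell\notin\{1,2\}$. Then all elements of $\mathcal{K}_{(a,b)}(\ell)$ have the same parity.
   Context: For integers $x,y$, $G_{(x,y)}$ is the set of positive integers $n$ such that $n\mid(x^k+y^k)$ for some positive integer $k$; for such $n$, $\mathcal{K}_{(x,y)}(n)=\{k\text{ positive integer}: n\mid(x^k+y^k)\}$. *)

(* Defs.v *)
From Stdlib Require Import ZArith.
Open Scope Z_scope.

Definition inK (x y n k : Z) : Prop := 0 < k /\ (n | x ^ k + y ^ k).

Definition inG (x y n : Z) : Prop := 0 < n /\ exists k, inK x y n k.

(* Main.v *)
Require Import Defs.
From Stdlib Require Import ZArith Lia.
Open Scope Z_scope.

Lemma div_pow_coprime (g a : Z) (n : nat) :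
  Z.gcd g a = 1 -> (g | a ^ Z.of_nat n) -> (g | 1).
Proof.
  intros Hg. induction n as [|n IH]; intros H.
  - simpl in H. exact H.
  - apply IH. rewrite Nat2Z.inj_succ, Z.pow_succ_r in H by lia.
    apply (Z.gauss g a); auto.
Qed.

Lemma coprime_b_l (a b l k : Z) :
  Z.gcd a b = 1 -> 0 < k -> (l | a ^ k + b ^ k) -> Z.gcd b l = 1.
Proof.
  intros Hab Hk Hl.
  set (g := Z.gcd b l).
  assert (Hgb : (g | b)) by apply Z.gcd_divide_l.
  assert (Hgl : (g | l)) by apply Z.gcd_divide_r.
  assert (Hgbk : (g | b ^ k)).
  { apply Z.divide_trans with b; auto.
    replace k with (Z.succ (k - 1)) by lia. rewrite Z.pow_succ_r by lia.
    apply Z.divide_mul_l, Z.divide_refl. }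
  assert (Hgak : (g | a ^ k)).
  { replace (a ^ k) with ((a ^ k + b ^ k) - b ^ k) by ring.
    apply Z.divide_sub_r; auto. apply Z.divide_trans with l; auto. }
  assert (Hga : Z.gcd g a = 1).
  { set (h := Z.gcd g a).
    assert (Hh : (h | 1)).
    { rewrite <- Hab. apply Z.gcd_greatest.
      - apply Z.gcd_divide_r.
      - apply Z.divide_trans with g; auto. apply Z.gcd_divide_l. }
    assert (0 <= h) by apply Z.gcd_nonneg.
    apply Z.divide_1_r in Hh. lia. }
  replace k with (Z.of_nat (Z.to_nat k)) in Hgak by lia.
  pose proof (div_pow_coprime g a _ Hga Hgak) as H1.
  assert (0 <= g) by apply Z.gcd_nonneg.
  apply Z.divide_1_r in H1. lia.
Qed.

Lemma key (a b l k1 k2 : Z) :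
  Z.gcd a b = 1 -> 0 < l -> l <> 1 -> l <> 2 ->
  inK a b l k1 -> inK a b l k2 -> Z.even k1 = true -> Z.even k2 = false -> False.
Proof.
  intros Hab Hl H1 H2 [Hk1 D1] [Hk2 D2] E1 E2.
  pose proof (coprime_b_l a b l k1 Hab Hk1 D1) as Hbl.
  destruct (Z.gcd_bezout b l 1 Hbl) as [u [v Huv]].
  assert (Hl0 : l <> 0) by lia.
  assert (Hbu : (b * u) mod l = 1 mod l).
  { replace (b * u) with (1 + (- v) * l) by lia. apply Z.mod_add; auto. }
  assert (Hc : forall k, 0 < k -> (l | a ^ k + b ^ k) ->
            ((a * u) ^ k) mod l = (-1) mod l).
  { intros k Hk Dk.
    replace ((a * u) ^ k) with ((a ^ k + b ^ k) * u ^ k + (-1) * (b * u) ^ k)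
      by (rewrite !Z.pow_mul_l; ring).
    rewrite Z.add_mod, Z.mul_mod by auto.
    apply Z.mod_divide in Dk; auto. rewrite Dk.
    rewrite Z.mul_mod with (a := -1) by auto.
    rewrite <- (Z.mod_pow_l (b * u)), Hbu, Z.mod_pow_l, Z.pow_1_l by lia.
    rewrite Z.mul_0_l, Z.mod_0_l, Z.add_0_l, Z.mod_mod, <- Z.mul_mod, Z.mul_1_r by auto.
    reflexivity. }
  set (c := a * u) in *.
  pose proof (Hc k1 Hk1 D1) as C1. pose proof (Hc k2 Hk2 D2) as C2.
  assert (Ev : Z.Even k1) by (apply Z.even_spec; auto).
  assert (Od : Z.Odd k2) by (apply Z.odd_spec; rewrite <- Z.negb_even, E2; auto).
  assert (X1 : (c ^ (k1 * k2)) mod l = 1 mod l).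
  { rewrite Z.mul_comm, Z.pow_mul_r by lia.
    rewrite <- (Z.mod_pow_l (c ^ k2)), C2, Z.mod_pow_l.
    destruct Ev as [j Hj]. rewrite Hj, Z.pow_mul_r by lia.
    replace ((-1) ^ 2) with 1 by reflexivity. rewrite Z.pow_1_l by lia.
    reflexivity. }
  assert (X2 : (c ^ (k1 * k2)) mod l = (-1) mod l).
  { rewrite Z.pow_mul_r by lia.
    rewrite <- (Z.mod_pow_l (c ^ k1)), C1, Z.mod_pow_l.
    destruct Od as [j Hj]. rewrite Hj.
    rewrite Z.pow_add_r, Z.pow_mul_r by lia.
    replace ((-1) ^ 2) with 1 by reflexivity. rewrite Z.pow_1_l by lia.
    rewrite Z.mul_1_l, Z.pow_1_r. reflexivity. }
  rewrite X1 in X2.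
  assert (Hd : (l | 1 - (-1))).
  { apply Z.mod_divide; auto. rewrite Zminus_mod, X2, Z.sub_diag. reflexivity. }
  apply Z.divide_pos_le in Hd; lia.
Qed.

Theorem lemma2p12 (a b l : Z) :
  Z.gcd a b = 1 -> inG a b l -> l <> 1 -> l <> 2 ->
  forall k1 k2, inK a b l k1 -> inK a b l k2 -> Z.even k1 = Z.even k2.
Proof.
  intros Hab [Hl _] H1 H2 k1 k2 K1 K2.
  destruct (Z.even k1) eqn:E1, (Z.even k2) eqn:E2; auto.
  - exfalso. exact (key a b l k1 k2 Hab Hl H1 H2 K1 K2 E1 E2).
  - exfalso. exact (key a b l k2 k1 Hab Hl H1 H2 K2 K1 E2 E1).
Qed.
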